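(* Let $A\in H_n$ and $B\in H_k$ be matrices that are neither positive semidefinite nor negative semidefinite. Then there exists a positive unital linear map $\Phi:H_n\to H_k$ with $\Phi(A)=B$ if and only if $\|A_+\|_\infty\geq\|B_+\|_\infty$ and $\|A_-\|_\infty\geq\|B_-\|_\infty$.
   Context: $H_n$ denotes the real vector space of $n\times n$ complex Hermitian matrices; $X\geq0$ means $X$ is positive semidefinite. A linear map $\Phi:H_n\to H_k$ is positive if $\Phi(X)\geq0$ for all $X\geq0$, and unital if $\Phi(\mathbb{1}_n)=\mathbb{1}_k$. Every $A\in H_n$ decomposes uniquely as $A=A_+-A_-$ with $A_+,A_-$ positive semidefinite and $A_+A_-=0$ (positive and negative parts). $\|\cdot\|_\infty$ is the operator norm (largest singular value). *)

(* Defs.v *)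
From HB Require Import structures.
From mathcomp Require Import all_boot all_order all_algebra.
From mathcomp Require Import boolp classical_sets reals.
From mathcomp Require Import complex.
Set Implicit Arguments. Unset Strict Implicit. Unset Printing Implicit Defensive.
Import Order.TTheory GRing.Theory Num.Theory.
Local Open Scope ring_scope.
Local Open Scope classical_set_scope.

Section Defs.
Variable R : realType.

Definition adjmx m n (M : 'M[R[i]]_(m, n)) : 'M[R[i]]_(n, m) :=
  (map_mx Num.conj M)^T.

Definition is_herm n (X : 'M[R[i]]_n) : Prop := adjmx X = X.

Definition is_psd n (X : 'M[R[i]]_n) : Prop :=
  is_herm X /\ forall x : 'cV[R[i]]_n, 0 <= (adjmx x *m X *m x) ord0 ord0.

Definition vnorm n (x : 'cV[R[i]]_n) : R :=
  Num.sqrt (\sum_(j < n) ((@complex.Re R (x j ord0)) ^+ 2 + (@complex.Im R (x j ord0)) ^+ 2)).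

Definition opnorm m n (M : 'M[R[i]]_(m, n)) : R :=
  sup [set vnorm (M *m x) | x in [set x : 'cV[R[i]]_n | vnorm x = 1]].

(* the (unique) decomposition A = A_+ - A_-, A_+, A_- >= 0, A_+ A_- = 0 *)
Definition is_posneg_decomp n (A : 'M[R[i]]_n) (p : 'M[R[i]]_n * 'M[R[i]]_n) : Prop :=
  [/\ is_psd p.1, is_psd p.2, p.1 *m p.2 = 0 & A = p.1 - p.2].

Definition posneg n (A : 'M[R[i]]_n) : 'M[R[i]]_n * 'M[R[i]]_n :=
  xget (0, 0) [set p | is_posneg_decomp A p].

Definition pos_part n (A : 'M[R[i]]_n) := (posneg A).1.
Definition neg_part n (A : 'M[R[i]]_n) := (posneg A).2.

(* A real-linear map H_n -> H_k, represented by a function on all n x n matrices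
   whose behaviour is only constrained on H_n. *)
Definition real_linear_on_herm n k (Phi : 'M[R[i]]_n -> 'M[R[i]]_k) : Prop :=
  [/\ forall X, is_herm X -> is_herm (Phi X),
      forall X Y, is_herm X -> is_herm Y -> Phi (X + Y) = Phi X + Phi Y &
      forall (r : R) X, is_herm X -> Phi ((r%:C)%C *: X) = (r%:C)%C *: Phi X].

Definition positive_map n k (Phi : 'M[R[i]]_n -> 'M[R[i]]_k) : Prop :=
  forall X, is_psd X -> is_psd (Phi X).

Definition unital_map n k (Phi : 'M[R[i]]_n -> 'M[R[i]]_k) : Prop :=
  Phi 1%:M = 1%:M.

End Defs.

(* Main.v *)
Require Import Defs.
From HB Require Import structures.
From mathcomp Require Import all_boot all_order all_algebra.
From mathcomp Require Import boolp classical_sets reals.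
From mathcomp Require Import complex.
From mathcomp Require Import spectral sesquilinear.
From mathcomp Require Import ring lra.
Import Order.TTheory GRing.Theory Num.Theory.
Local Open Scope ring_scope.
Set Implicit Arguments. Unset Strict Implicit. Unset Printing Implicit Defensive.
Section S.
Variable R : realType.
Local Notation C := R[i].

Lemma adjmxM m n p (M : 'M[C]_(m,n)) (N : 'M[C]_(n,p)) :
  adjmx (M *m N) = adjmx N *m adjmx M.
Proof. by rewrite /adjmx map_mxM trmx_mul. Qed.

Lemma adjmxK m n (M : 'M[C]_(m,n)) : adjmx (adjmx M) = M.
Proof. by apply/matrixP => i j; rewrite !mxE conjCK. Qed.

Lemma adjmxD m n (M N : 'M[C]_(m,n)) : adjmx (M + N) = adjmx M + adjmx N.
Proof. by apply/matrixP => i j; rewrite !mxE rmorphD. Qed.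

Lemma adjmxN m n (M : 'M[C]_(m,n)) : adjmx (- M) = - adjmx M.
Proof. by apply/matrixP => i j; rewrite !mxE rmorphN. Qed.

Lemma adjmxZ m n a (M : 'M[C]_(m,n)) : adjmx (a *: M) = Num.conj a *: adjmx M.
Proof. by apply/matrixP => i j; rewrite !mxE rmorphM. Qed.

Lemma adjmx1 n : adjmx (1%:M : 'M[C]_n) = 1%:M.
Proof. by apply/matrixP => i j; rewrite !mxE eq_sym; case: (i == j); rewrite ?rmorph1 ?rmorph0. Qed.

Lemma conj_realC (r : R) : Num.conj (r%:C)%C = (r%:C)%C.
Proof. exact: conjc_real. Qed.

Definition fm n (P : 'M[C]_n) (x y : 'cV[C]_n) : C := (adjmx x *m P *m y) ord0 ord0.
Definition qf n (P : 'M[C]_n) (x : 'cV[C]_n) : R := complex.Re (fm P x x).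

Lemma fm_conj n (P : 'M[C]_n) x y : is_herm P -> Num.conj (fm P x y) = fm P y x.
Proof.
move=> hP; rewrite /fm.
have -> : Num.conj ((adjmx x *m P *m y) ord0 ord0) = (adjmx (adjmx x *m P *m y)) ord0 ord0.
  by rewrite !mxE.
by rewrite !adjmxM adjmxK hP mulmxA.
Qed.

Lemma conj_eq_real (z : C) : Num.conj z = z -> z = ((complex.Re z)%:C)%C.
Proof.
case: z => a b /= [] h; congr (Complex _ _).
have : b + b = 0 by rewrite -{1}h addNr.
by move/eqP; rewrite -mulr2n -mulr_natr mulf_eq0 pnatr_eq0 orbF => /eqP.
Qed.

Lemma fm_real n (P : 'M[C]_n) x : is_herm P -> fm P x x = ((qf P x)%:C)%C.
Proof. by move=> hP; apply: conj_eq_real; rewrite fm_conj. Qed.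

Lemma psd_qf n (P : 'M[C]_n) x : is_psd P -> 0 <= qf P x.
Proof.
by case=> hP /(_ x); rewrite -/(fm P x x) (fm_real x hP) lecR.
Qed.

Lemma psdP n (P : 'M[C]_n) : is_herm P -> (forall x, 0 <= qf P x) -> is_psd P.
Proof.
move=> hP H; split => // x; have := fm_real x hP; rewrite /fm => ->.
by rewrite lecR.
Qed.

Lemma fmDr n (P : 'M[C]_n) x y z : fm P x (y + z) = fm P x y + fm P x z.
Proof. by rewrite /fm mulmxDr mxE. Qed.
Lemma fmDl n (P : 'M[C]_n) x y z : fm P (x + y) z = fm P x z + fm P y z.
Proof. by rewrite /fm adjmxD !mulmxDl mxE. Qed.
Lemma fmZr n (P : 'M[C]_n) x a y : fm P x (a *: y) = a * fm P x y.
Proof. by rewrite /fm -scalemxAr mxE. Qed.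
Lemma fmZl n (P : 'M[C]_n) a x y : fm P (a *: x) y = Num.conj a * fm P x y.
Proof. by rewrite /fm adjmxZ -!scalemxAl mxE. Qed.
Lemma fmNr n (P : 'M[C]_n) x y : fm P x (- y) = - fm P x y.
Proof. by rewrite -scaleN1r fmZr mulN1r. Qed.
Lemma fmNl n (P : 'M[C]_n) x y : fm P (- x) y = - fm P x y.
Proof. by rewrite -scaleN1r fmZl rmorphN rmorph1 mulN1r. Qed.
Lemma fmPD n (P Q : 'M[C]_n) x y : fm (P + Q) x y = fm P x y + fm Q x y.
Proof. by rewrite /fm mulmxDr mulmxDl mxE. Qed.
Lemma fmPZ n (P : 'M[C]_n) a x y : fm (a *: P) x y = a * fm P x y.
Proof. by rewrite /fm -scalemxAr -scalemxAl mxE. Qed.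
Lemma fmPN n (P : 'M[C]_n) x y : fm (- P) x y = - fm P x y.
Proof. by rewrite -scaleN1r fmPZ mulN1r. Qed.
Lemma fm_mul n (M D : 'M[C]_n) x y :
  fm (adjmx M *m D *m M) x y = fm D (M *m x) (M *m y).
Proof. by rewrite /fm adjmxM !mulmxA. Qed.
Lemma fm_mul1 n (P : 'M[C]_n) x y : fm P x y = fm 1%:M x (P *m y).
Proof. by rewrite /fm mulmx1 mulmxA. Qed.

End S.
Section S2.
Variable R : realType.
Local Notation C := R[i].

Lemma ReC (r : R) : complex.Re ((r%:C)%C : C) = r. Proof. by []. Qed.

Lemma sum_ge0_vn n (x : 'cV[C]_n) :
  0 <= \sum_(j < n) ((complex.Re (x j ord0)) ^+ 2 + (complex.Im (x j ord0)) ^+ 2).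
Proof. by apply: sumr_ge0 => j _; rewrite addr_ge0 // sqr_ge0. Qed.

Lemma vnorm_ge0 n (x : 'cV[C]_n) : 0 <= vnorm x.
Proof. exact: sqrtr_ge0. Qed.

Lemma fm1_vnorm n (x : 'cV[C]_n) : fm 1%:M x x = ((vnorm x ^+ 2)%:C)%C.
Proof.
rewrite /vnorm sqr_sqrtr ?sum_ge0_vn // /fm mulmx1 mxE rmorph_sum.
apply: eq_bigr => j _; rewrite !mxE; case: (x j ord0) => a b.
by apply/eqP; rewrite eq_complex /=; apply/andP; split; apply/eqP; ring.
Qed.

Lemma qf1 n (x : 'cV[C]_n) : qf 1%:M x = vnorm x ^+ 2.
Proof. by rewrite /qf fm1_vnorm. Qed.

Lemma psd1 n : is_psd (1%:M : 'M[C]_n).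
Proof. by apply: psdP; [exact: adjmx1 | move=> x; rewrite qf1 sqr_ge0]. Qed.

Lemma cs_real (a b c : R) : 0 <= c ->
  (forall s, 0 <= a - 2*s*b + s^+2*c) -> b^+2 <= a*c.
Proof.
move=> cge H; have a0 : 0 <= a.
  by have := H 0; have -> : a - 2*0*b + 0^+2*c = a by ring.
have [c0|c0] := eqVneq c 0.
  rewrite c0 mulr0; have [b0|b0] := eqVneq b 0; first by rewrite b0 expr0n.
  have := H ((a+1)/(2*b)); rewrite c0.
  have -> : a - 2 * ((a + 1) / (2 * b)) * b + ((a + 1) / (2 * b)) ^+ 2 * 0 = -1.
    by field.
  by move=> h; lra.
have hs : (b / c) * c = b by rewrite divfK.
have := H (b / c); move: hs; set s := b / c => hs hh.
have cp : 0 < c by rewrite lt_def c0.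
nra.
Qed.

Lemma cs_fm n (P : 'M[C]_n) x y (b : R) : is_psd P -> fm P x y = (b%:C)%C ->
  b^+2 <= qf P x * qf P y.
Proof.
move=> hP hb; have hh := hP.1.
have hyx : fm P y x = (b%:C)%C by rewrite -fm_conj // hb conj_realC.
apply: cs_real; first exact: psd_qf.
move=> s; have := psd_qf (x - (s%:C)%C *: y) hP.
suff -> : qf P (x - (s%:C)%C *: y) = qf P x - 2 * s * b + s ^+ 2 * qf P y by [].
rewrite /qf fmDl !fmDr !fmNl !fmNr !fmZl !fmZr conj_realC hb hyx.
rewrite (fm_real x hh) (fm_real y hh) /=.
ring.
Qed.

End S2.
Section S3.
Variable R : realType.
Local Notation C := R[i].

Definition sq (z : C) : R := complex.Re z ^+ 2 + complex.Im z ^+ 2.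
Definition dg n (d : 'I_n -> R) : 'M[C]_n := diag_mx (\row_j ((d j)%:C)%C).

Lemma sq_ge0 z : 0 <= sq z.
Proof. by rewrite addr_ge0 // sqr_ge0. Qed.

Lemma conjzz (z : C) : Num.conj z * z = ((sq z)%:C)%C.
Proof.
case: z => a b; rewrite /sq /=.
by apply/eqP; rewrite eq_complex /=; apply/andP; split; apply/eqP; ring.
Qed.

Lemma vnorm2 n (x : 'cV[C]_n) : vnorm x ^+ 2 = \sum_j sq (x j ord0).
Proof. by rewrite /vnorm sqr_sqrtr ?sum_ge0_vn. Qed.

Lemma qf_dg n (d : 'I_n -> R) x : qf (dg d) x = \sum_j d j * sq (x j ord0).
Proof.
rewrite /qf /fm /dg mul_mx_diag mxE raddf_sum; apply: eq_bigr => j _.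
rewrite !mxE mulrAC conjzz -rmorphM /=.
by rewrite mulrC.
Qed.

Lemma adj_dg n (d : 'I_n -> R) : adjmx (dg d) = dg d.
Proof.
apply/matrixP => i j; rewrite !mxE eq_sym.
by case: eqP => [->|_]; rewrite ?mulr1n ?mulr0n ?conj_realC ?rmorph0.
Qed.

Lemma herm_conj_dg n (U : 'M[C]_n) d : is_herm (adjmx U *m dg d *m U).
Proof. by rewrite /is_herm !adjmxM adjmxK adj_dg mulmxA. Qed.

Lemma psd_conj_dg n (U : 'M[C]_n) d : (forall j, 0 <= d j) ->
  is_psd (adjmx U *m dg d *m U).
Proof.
move=> hd; apply: psdP; first exact: herm_conj_dg.
move=> x; rewrite /qf fm_mul -/(qf _ _) qf_dg.
by apply: sumr_ge0 => j _; apply: mulr_ge0 => //; exact: sq_ge0.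
Qed.

End S3.
Section S3b.
Variable R : realType.
Local Notation C := R[i].

Lemma spec n (A : 'M[C]_n) : is_herm A -> exists (U : 'M[C]_n) (d : 'I_n -> R),
  [/\ adjmx U *m U = 1%:M, U *m adjmx U = 1%:M & A = adjmx U *m dg d *m U].
Proof.
move=> hA.
have hA' : A \is hermsymmx.
  by apply/is_hermitianmxP; rewrite expr0 scale1r -map_trmx; exact: (esym hA).
have /hermitian_normalmx /orthomx_spectralP Aeq := hA'.
have hreal := hermitian_spectral_diag_real hA'.
have hU := spectral_unitarymx A.
move: Aeq hU; set P := spectralmx A; set sp := spectral_diag A => Aeq hU.
have hinv : invmx P = adjmx P.
  by apply/matrixP=> i j; rewrite invmx_unitary // !mxE.
have e1 : P *m adjmx P = 1%:M.
  by rewrite -hinv mulmxV // unitarymx_unit.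
have e2 : adjmx P *m P = 1%:M by exact: mulmx1C.
exists P, (fun j => complex.Re (sp 0 j)); split; [exact: e2 | exact: e1 |].
have -> : dg (fun j => complex.Re (sp 0 j)) = diag_mx sp.
  rewrite /dg; congr diag_mx; apply/rowP => j; rewrite mxE.
  by rewrite RRe_real //; move/mxOverP: hreal; apply.
by rewrite -hinv.
Qed.

End S3b.
Section S4.
Variable R : realType.
Local Notation C := R[i].

Lemma exists_max n (d : 'I_n -> R) : (0 < n)%N -> exists i0, forall j, d j <= d i0.
Proof.
move=> n0; case: (@arg_maxP _ R 'I_n (Ordinal n0) xpredT d isT) => i _ H.
by exists i => j; exact: H.
Qed.

Lemma qf_unit n (U : 'M[C]_n) x : adjmx U *m U = 1%:M ->
  vnorm (U *m x) ^+ 2 = vnorm x ^+ 2.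
Proof.
by move=> hU; rewrite -!qf1 /qf -fm_mul mulmx1 hU.
Qed.

Lemma sq_delta n (i0 j : 'I_n) : sq ((delta_mx i0 ord0 : 'cV[C]_n) j ord0) = (j == i0)%:R.
Proof.
rewrite mxE eqxx andbT /sq; case: (j == i0) => /=.
  by rewrite expr1n expr0n addr0.
by rewrite expr0n addr0.
Qed.

Lemma top n (A : 'M[C]_n) : (0 < n)%N -> is_herm A -> exists al (u : 'cV[C]_n),
  [/\ vnorm u = 1, qf A u = al & forall x, qf A x <= al * vnorm x ^+ 2].
Proof.
move=> n0 /spec [U [d [hU1 hU2 ->]]].
have [i0 Hi0] := exists_max d n0.
pose e := (delta_mx i0 ord0 : 'cV[C]_n).
exists (d i0), (adjmx U *m e).
have Ue : U *m (adjmx U *m e) = e by rewrite mulmxA hU2 mul1mx.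
split.
- apply/eqP; rewrite -sqrp_eq1 ?vnorm_ge0 //.
  rewrite -(qf_unit _ hU1) Ue vnorm2 (bigD1 i0) //= big1 => [|j hj].
    by rewrite sq_delta eqxx addr0.
  by rewrite sq_delta (negPf hj).
- rewrite /qf fm_mul -/(qf _ _) Ue qf_dg (bigD1 i0) //= big1 => [|j hj].
    by rewrite sq_delta eqxx mulr1 addr0.
  by rewrite sq_delta (negPf hj) mulr0.
- move=> x; rewrite /qf fm_mul -/(qf _ _) qf_dg -(qf_unit x hU1) vnorm2 mulr_sumr.
  by apply: ler_sum => j _; apply: ler_wpM2r => //; exact: sq_ge0.
Qed.

Lemma dgB n (f g : 'I_n -> R) : dg f - dg g = dg (fun j => f j - g j) :> 'M[C]_n.
Proof. by apply/matrixP=> i j; rewrite !mxE -mulrnBl -rmorphB. Qed.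

Lemma dgM n (f g : 'I_n -> R) : dg f *m dg g = dg (fun j => f j * g j) :> 'M[C]_n.
Proof. by rewrite /dg mulmx_diag; congr diag_mx; apply/rowP => j; rewrite !mxE -rmorphM. Qed.

Definition pos (x : R) : R := if 0 <= x then x else 0.

Lemma pos_ge0 x : 0 <= pos x.
Proof. by rewrite /pos; case: ifP. Qed.

Lemma max_pn (x : R) : pos x * pos (- x) = 0 /\ pos x - pos (- x) = x.
Proof.
rewrite /pos; case: ifP => h1; case: ifP => h2.
- have -> : x = 0 by apply/eqP; rewrite eq_le; rewrite oppr_ge0 in h2; rewrite h2 h1.
  by rewrite oppr0 mul0r subr0.
- by rewrite mulr0 subr0.
- by rewrite mul0r sub0r opprK.
- by exfalso; move: h1 h2; rewrite oppr_ge0 => /negbT h1 /negbT h2; move: h1 h2; rewrite -!ltNge => h1 h2; lra.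
Qed.

Lemma dec_ex n (A : 'M[C]_n) : is_herm A -> exists p, is_posneg_decomp A p.
Proof.
move=> /spec [U [d [hU1 hU2 ->]]].
exists (adjmx U *m dg (fun j => pos (d j)) *m U,
        adjmx U *m dg (fun j => pos (- d j)) *m U); split => /=.
- by apply: psd_conj_dg => j; exact: pos_ge0.
- by apply: psd_conj_dg => j; exact: pos_ge0.
- rewrite !mulmxA -[_ *m U *m adjmx U]mulmxA hU2 mulmx1 -[_ *m dg _ *m dg _]mulmxA dgM.
  have -> : dg (fun j => pos (d j) * pos (- d j)) = 0 :> 'M[C]_n.
    by apply/matrixP => i j; rewrite !mxE (max_pn _).1 mul0rn.
  by rewrite mulmx0 mul0mx.
- rewrite -mulmxBl -mulmxBr dgB; congr (_ *m dg _ *m _).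
  by apply: funext => j; rewrite (max_pn _).2.
Qed.

End S4.
Section S5.
Variable R : realType.
Local Notation C := R[i].
Local Open Scope classical_set_scope.

Lemma adjmx0 m n : adjmx (0 : 'M[C]_(m,n)) = 0.
Proof. by apply/matrixP => i j; rewrite !mxE rmorph0. Qed.

Lemma qfD n (P Q : 'M[C]_n) x : qf (P + Q) x = qf P x + qf Q x.
Proof. by rewrite /qf fmPD raddfD. Qed.
Lemma qfN n (P : 'M[C]_n) x : qf (- P) x = - qf P x.
Proof. by rewrite /qf fmPN raddfN. Qed.
Lemma qfB n (P Q : 'M[C]_n) x : qf (P - Q) x = qf P x - qf Q x.
Proof. by rewrite qfD qfN. Qed.

Lemma qfP_le n (P : 'M[C]_n) x : is_psd P -> vnorm x = 1 -> qf P x <= vnorm (P *m x).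
Proof.
move=> hP hx.
have h : fm 1%:M x (P *m x) = ((qf P x)%:C)%C by rewrite -fm_mul1 fm_real //; case: hP.
have := cs_fm (@psd1 R n) h; rewrite !qf1 hx expr1n mul1r => hh.
have h0 := psd_qf x hP; have h1 := vnorm_ge0 (P *m x).
nra.
Qed.

Lemma real_aux (r m : R) : 0 <= r -> 0 <= m -> r ^+ 4 <= r * (m * r ^+ 2) -> r <= m.
Proof.
move=> r0 m0 h; have [->|rp] := eqVneq r 0; first by [].
have rp' : 0 < r by rewrite lt_def rp r0.
have : r ^+ 3 * (r - m) <= 0.
  have -> : r ^+ 3 * (r - m) = r ^+ 4 - r * (m * r ^+ 2) by ring.
  by rewrite subr_le0.
rewrite pmulr_rle0 ?exprn_gt0 // subr_le0 //.
Qed.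

Lemma opnorm_dec n (A P N : 'M[C]_n) (al : R) (u : 'cV[C]_n) :
  is_posneg_decomp A (P, N) -> vnorm u = 1 -> qf A u = al ->
  (forall x, qf A x <= al * vnorm x ^+ 2) -> opnorm P = pos al.
Proof.
case=> /= hP hN hPN hA hu hal hmax.
have hNP : N *m P = 0.
  by have := congr1 (@adjmx _ _ _) hPN; rewrite adjmxM hN.1 hP.1 adjmx0.
have qfA x : qf A x = qf P x - qf N x by rewrite hA qfB.
have bound x : vnorm x = 1 -> vnorm (P *m x) <= pos al.
  move=> hx; set y := P *m x; set r := vnorm y.
  have h2 := qfP_le hP hx.
  have e1 : fm P x y = ((r ^+ 2)%:C)%C.
    by rewrite -fm1_vnorm /fm mulmx1 adjmxM hP.1 /y !mulmxA.
  have h1 := cs_fm hP e1.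
  have e3 : qf N y = 0.
    by rewrite /qf /fm /y mulmxA -(mulmxA _ N P) hNP mulmx0 mul0mx mxE.
  have h3 : qf P y <= pos al * r ^+ 2.
    have : qf P y = qf A y by rewrite qfA e3 subr0.
    move=> ->; apply: le_trans (hmax y) _; apply: ler_wpM2r; first exact: sqr_ge0.
    by rewrite /pos; case: ifP => // /negbT; rewrite -ltNge => /ltW.
  have q0 := psd_qf x hP; have q1 := psd_qf y hP.
  have r0 : 0 <= r by exact: vnorm_ge0.
  apply: real_aux => //; first exact: pos_ge0.
  have : (r ^+ 2) ^+ 2 <= r * (pos al * r ^+ 2).
    apply: le_trans h1 _; apply: ler_pM => //.
  by rewrite -exprM.
have hub : ubound [set vnorm (P *m x) | x in [set x : 'cV[C]_n | vnorm x = 1]] (pos al).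
  by move=> z [x hx <-]; exact: bound.
have hin : [set vnorm (P *m x) | x in [set x : 'cV[C]_n | vnorm x = 1]] (vnorm (P *m u)).
  by exists u.
apply/eqP; rewrite eq_le; apply/andP; split.
  by apply: ge_sup => //; exists (vnorm (P *m u)).
have hs : vnorm (P *m u) <= opnorm P.
  have hE : has_ubound [set vnorm (P *m x) | x in [set x : 'cV[C]_n | vnorm x = 1]].
    by exists (pos al).
  by move: (ub_le_sup hE) => /(_ _ hin).
rewrite /pos; case: ifP => _.
  rewrite -hal qfA; apply: le_trans hs; apply: le_trans (qfP_le hP hu).
  by rewrite gerBl; exact: psd_qf.
by apply: le_trans hs; exact: vnorm_ge0.
Qed.

End S5.
Section S6.
Variable R : realType.
Local Notation C := R[i].

Lemma n_pos n (A : 'M[C]_n) : is_herm A -> ~ is_psd A -> (0 < n)%N.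
Proof.
case: n A => [|n] A hA hn //; exfalso; apply: hn; split => // x.
by rewrite mxE big_ord0.
Qed.

Lemma herm_opp n (A : 'M[C]_n) : is_herm A -> is_herm (- A).
Proof. by rewrite /is_herm adjmxN => ->. Qed.

Lemma herm_scale n (r : R) (A : 'M[C]_n) : is_herm A -> is_herm ((r%:C)%C *: A).
Proof. by rewrite /is_herm adjmxZ conj_realC => ->. Qed.

Lemma herm1 n : is_herm (1%:M : 'M[C]_n).
Proof. exact: adjmx1. Qed.

Lemma exists_pos n (A : 'M[C]_n) : is_herm A -> ~ is_psd (- A) -> exists x, 0 < qf A x.
Proof.
move=> hA H; case: (pselect (exists x, 0 < qf A x)) => // hne; exfalso.
apply: H; apply: psdP; first exact: herm_opp.
move=> x; rewrite qfN oppr_ge0 leNgt; apply/negP => hx; apply: hne; by exists x.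
Qed.

Lemma al_pos n (A : 'M[C]_n) al : is_herm A -> ~ is_psd (- A) ->
  (forall x, qf A x <= al * vnorm x ^+ 2) -> 0 < al.
Proof.
move=> hA H hmax; have [x hx] := exists_pos hA H.
have := hmax x; have := sqr_ge0 (vnorm x); move: hx.
set q := qf A x; set w := vnorm x ^+ 2 => hx hw hq.
rewrite ltNge; apply/negP => hal.
have : al * w <= 0 by rewrite mulr_le0_ge0.
lra.
Qed.

Lemma ReM_realC (r : R) (z : C) : complex.Re ((r%:C)%C * z) = r * complex.Re z.
Proof. by case: z => a b /=; ring. Qed.

Lemma qfZ n (r : R) (P : 'M[C]_n) x : qf ((r%:C)%C *: P) x = r * qf P x.
Proof. by rewrite /qf fmPZ ReM_realC. Qed.

Lemma realCN1 : ((-1 : R)%:C)%C = -1 :> C.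
Proof. by apply/eqP; rewrite eq_complex /= oppr0 !eqxx. Qed.

Lemma dir1 n k (Phi : 'M[C]_n -> 'M[C]_k) A B alA alB u :
  real_linear_on_herm Phi -> positive_map Phi -> unital_map Phi ->
  is_herm A -> Phi A = B ->
  (forall x, qf A x <= alA * vnorm x ^+ 2) -> vnorm u = 1 -> qf B u = alB ->
  alB <= alA.
Proof.
case=> hH hD hZ hpos hun hA hB hmax hu hal.
pose X := (alA%:C)%C *: (1%:M : 'M[C]_n) + ((-1)%:C)%C *: A.
have hX : is_psd X.
  apply: psdP.
    by rewrite /X /is_herm adjmxD; congr (_ + _); apply: herm_scale; [exact: herm1|].
  by move=> x; rewrite qfD !qfZ qf1; have := hmax x; lra.
have hPX : Phi X = (alA%:C)%C *: 1%:M + ((-1)%:C)%C *: B.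
  rewrite /X hD; [|exact/herm_scale/herm1|exact/herm_scale].
  by rewrite !hZ ?hun ?hB //; exact: herm1.
have := psd_qf u (hpos _ hX); rewrite hPX qfD !qfZ qf1 hu hal; lra.
Qed.

Lemma dec_swap n (A P N : 'M[C]_n) : is_posneg_decomp A (P, N) ->
  is_posneg_decomp (- A) (N, P).
Proof.
case=> /= hP hN hPN hA; split => //=.
  by have := congr1 (@adjmx _ _ _) hPN; rewrite adjmxM hN.1 hP.1 adjmx0.
by rewrite hA opprB.
Qed.

Lemma posneg_spec n (A : 'M[C]_n) : is_herm A -> is_posneg_decomp A (posneg A).
Proof. by move=> /dec_ex [p hp]; rewrite /posneg; apply: (xgetI _ hp). Qed.

Lemma pos_part_norm n (A : 'M[C]_n) al u : is_herm A -> vnorm u = 1 -> qf A u = al ->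
  (forall x, qf A x <= al * vnorm x ^+ 2) -> opnorm (pos_part A) = pos al.
Proof.
move=> hA hu hal hmax; have := posneg_spec hA; rewrite /pos_part.
case: (posneg A) => P N hd /=; exact: opnorm_dec hd hu hal hmax.
Qed.

Lemma neg_part_norm n (A : 'M[C]_n) al u : is_herm A -> vnorm u = 1 -> qf (- A) u = al ->
  (forall x, qf (- A) x <= al * vnorm x ^+ 2) -> opnorm (neg_part A) = pos al.
Proof.
move=> hA hu hal hmax; have := posneg_spec hA; rewrite /neg_part.
case: (posneg A) => P N /dec_swap hd /=; exact: opnorm_dec hd hu hal hmax.
Qed.

Lemma pos_id (x : R) : 0 < x -> pos x = x.
Proof. by move=> h; rewrite /pos (ltW h). Qed.

Lemma le_pos (x : R) : x <= pos x.
Proof. by rewrite /pos; case: ifP => // /negbT; rewrite -ltNge => /ltW. Qed.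

End S6.
Section S7.
Variable R : realType.
Local Notation C := R[i].

Lemma vnorm_delta n (j : 'I_n) : vnorm (delta_mx j ord0 : 'cV[C]_n) = 1.
Proof.
apply/eqP; rewrite -sqrp_eq1 ?vnorm_ge0 //.
rewrite vnorm2 (bigD1 j) //= big1 => [|i hi].
  by rewrite sq_delta eqxx addr0.
by rewrite sq_delta (negPf hi).
Qed.

Lemma qf_dg_delta n (d : 'I_n -> R) j : qf (dg d) (delta_mx j ord0 : 'cV[C]_n) = d j.
Proof.
rewrite qf_dg (bigD1 j) //= big1 => [|i hi].
  by rewrite sq_delta eqxx mulr1 addr0.
by rewrite sq_delta (negPf hi) mulr0.
Qed.

Lemma diag_bound n (B V : 'M[C]_n) b al : adjmx V *m V = 1%:M -> V *m adjmx V = 1%:M ->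
  B = adjmx V *m dg b *m V -> (forall x, qf B x <= al * vnorm x ^+ 2) -> forall j, b j <= al.
Proof.
move=> hV1 hV2 hB hmax j.
pose e := (delta_mx j ord0 : 'cV[C]_n).
have Ve : V *m (adjmx V *m e) = e by rewrite mulmxA hV2 mul1mx.
have := hmax (adjmx V *m e).
rewrite -(qf_unit _ hV1) Ve vnorm_delta expr1n mulr1 hB /qf fm_mul -/(qf _ _) Ve.
by rewrite qf_dg_delta.
Qed.

Lemma constr n k (A : 'M[C]_n) (B : 'M[C]_k) (alA beA : R) (u v : 'cV[C]_n)
  (V : 'M[C]_k) (b : 'I_k -> R) :
  is_herm A -> vnorm u = 1 -> qf A u = alA -> vnorm v = 1 -> qf (- A) v = beA ->
  0 < alA -> 0 < beA -> adjmx V *m V = 1%:M -> V *m adjmx V = 1%:M ->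
  B = adjmx V *m dg b *m V ->
  (forall j, b j <= alA) -> (forall j, - b j <= beA) ->
  exists Phi : 'M[C]_n -> 'M[C]_k,
    [/\ real_linear_on_herm Phi, positive_map Phi, unital_map Phi & Phi A = B].
Proof.
move=> hA hu hal hv hbe alp bep hV1 hV2 hB hb1 hb2.
pose t j := (b j + beA) / (alA + beA).
have c0 : alA + beA != 0 by rewrite gt_eqF // addr_gt0.
pose Phi (X : 'M[C]_n) := adjmx V *m
  diag_mx (\row_j ((t j)%:C%C * fm X u u + (1 - t j)%:C%C * fm X v v)) *m V.
have hPhi X : is_herm X ->
    Phi X = adjmx V *m dg (fun j => t j * qf X u + (1 - t j) * qf X v) *m V.
  move=> hX; rewrite /Phi /dg; congr (_ *m diag_mx _ *m _); apply/rowP => j.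
  rewrite !mxE (fm_real u hX) (fm_real v hX).
  by rewrite -!rmorphM -rmorphD.
exists Phi; split.
- split.
  + by move=> X hX; rewrite hPhi //; exact: herm_conj_dg.
  + move=> X Y _ _; rewrite /Phi -mulmxDl -mulmxDr; congr (_ *m _ *m _).
    apply/matrixP => i j; rewrite !mxE !fmPD -mulrnDl; congr (_ *+ _); ring.
  + move=> r X _; rewrite /Phi scalemxAl scalemxAr; congr (_ *m _ *m _).
    apply/matrixP => i j; rewrite !mxE !fmPZ mulrnAr; congr (_ *+ _); ring.
- move=> X hX; rewrite hPhi; last by case: hX.
  apply: psd_conj_dg => j.
  have q1 := psd_qf u hX; have q2 := psd_qf v hX.
  have t0 : 0 <= t j by rewrite /t divr_ge0 //; [have := hb2 j; lra | lra].
  have t1 : 1 - t j = (alA - b j) / (alA + beA) by rewrite /t; field.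
  have t1' : 0 <= 1 - t j by rewrite t1 divr_ge0 //; [have := hb1 j; lra | lra].
  by apply: addr_ge0; apply: mulr_ge0.
- rewrite /unital_map hPhi; last exact: herm1.
  rewrite !qf1 hu hv expr1n.
  have -> : dg (fun j => t j * 1 + (1 - t j) * 1) = 1%:M :> 'M[C]_k.
    apply/matrixP => i j; rewrite !mxE.
    have -> : t i * 1 + (1 - t i) * 1 = 1 by ring.
    by [].
  by rewrite mulmx1 hV1.
- rewrite hPhi // hB; congr (_ *m dg _ *m _); apply: funext => j.
  have hv' : qf A v = - beA by rewrite -hbe qfN opprK.
  rewrite hal hv' /t; field.
  exact: c0.
Qed.

End S7.
Unset Implicit Arguments.
Lemma dgN (R : realType) n (b : 'I_n -> R) :
  - dg b = dg (fun j => - b j) :> 'M[R[i]]_n.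
Proof. by apply/matrixP => i j; rewrite !mxE -mulNrn rmorphN. Qed.

Theorem theorem2 (R : realType) (n k : nat)
    (A : 'M[R[i]]_n) (B : 'M[R[i]]_k) :
  is_herm A -> is_herm B ->
  ~ is_psd A -> ~ is_psd (- A) -> ~ is_psd B -> ~ is_psd (- B) ->
  (exists Phi : 'M[R[i]]_n -> 'M[R[i]]_k,
      [/\ real_linear_on_herm Phi, positive_map Phi, unital_map Phi & Phi A = B])
  <->
  (opnorm (pos_part B) <= opnorm (pos_part A) /\
   opnorm (neg_part B) <= opnorm (neg_part A)).
Proof.
move=> hA hB nA nmA nB nmB.
have n0 := n_pos hA nA; have k0 := n_pos hB nB.
have [alA [u [hu hal hmaxA]]] := top n0 hA.
have [beA [v [hv hbe hmaxA']]] := top n0 (herm_opp hA).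
have [alB [uB [huB halB hmaxB]]] := top k0 hB.
have [beB [vB [hvB hbeB hmaxB']]] := top k0 (herm_opp hB).
have alp : 0 < alA := al_pos hA nmA hmaxA.
have bep : 0 < beA.
  by apply: (al_pos (herm_opp hA) _ hmaxA'); rewrite opprK.
rewrite (pos_part_norm hA hu hal hmaxA) (neg_part_norm hA hv hbe hmaxA').
rewrite (pos_part_norm hB huB halB hmaxB) (neg_part_norm hB hvB hbeB hmaxB').
rewrite (pos_id alp) (pos_id bep).
split.
- case=> Phi [hL hP hU hPhi].
  have h1 := dir1 hL hP hU hA hPhi hmaxA huB halB.
  have hPhiN : Phi (- A) = - B.
    have := hL; case=> _ _ hZ.
    by have := hZ (-1) A hA; rewrite realCN1 !scaleN1r hPhi.
  have h2 := dir1 hL hP hU (herm_opp hA) hPhiN hmaxA' hvB hbeB.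
  by split; rewrite /pos; case: ifP => _ //; [exact: ltW | exact: ltW].
- case=> h1 h2.
  have [V [b [hV1 hV2 hBeq]]] := spec hB.
  apply: (constr hA hu hal hv hbe alp bep hV1 hV2 hBeq).
  + move=> j; have := diag_bound hV1 hV2 hBeq hmaxB j; have := le_pos alB; lra.
  + move=> j.
    have hBeq' : - B = adjmx V *m dg (fun j => - b j) *m V.
      by rewrite hBeq -dgN mulmxN mulNmx.
    have := diag_bound hV1 hV2 hBeq' hmaxB' j; have := le_pos beB; lra.
Qed.
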